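(* Let $G$ be a group of order $N$, let $d\geqslant 2$ be an integer, let $x\in G\setminus\{1\}$ and let $1\leqslant i\leqslant d-1$. The number of ordered pairs $(e,f)$ of $d$-edges of $\Gamma_x$ with $|e\cap f|=i$ is at most $2^{2d}\binom{d}{i}^2 i!\,N^{2d-i-2}$.
   Context: For a group $G$, an integer $d\geqslant 2$ and $x\in G\setminus\{1\}$, $\Gamma_x$ is the hypergraph with vertex set $G\setminus\{1\}$ whose edges are the subsets $E\subseteq G\setminus\{1\}$ for which there exist an integer $\ell$ with $|E|\leqslant\ell\leqslant d$, elements $h_1,\ldots,h_\ell\in E$ (not necessarily distinct) and signs $a_1,\ldots,a_\ell\in\{-1,1\}$ such that every element of $E$ appears at least once among $h_1,\ldots,h_\ell$ and $h_1^{a_1}\cdots h_\ell^{a_\ell}=x$. An edge $E$ with $|E|=k$ is called a $k$-edge. *)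

(* Defs.v *)
From mathcomp Require Import all_boot all_fingroup.
Set Implicit Arguments. Unset Strict Implicit. Unset Printing Implicit Defensive.

Local Open Scope group_scope.

(* E is an edge of Gamma_x (for the parameter d): E is a subset of G \ {1},
   and there are l with #|E| <= l <= d, elements h_0..h_{l-1} of E (covering E)
   and signs a_j (true = +1, false = -1) with h_0^{a_0} * ... * h_{l-1}^{a_{l-1}} = x. *)
Definition is_edge (gT : finGroupType) (d : nat) (x : gT) (E : {set gT}) : bool :=
  (1 \notin E) &&
  [exists l : 'I_d.+1,
     (#|E| <= l)%N &&
     [exists h : {ffun 'I_l -> gT}, exists a : {ffun 'I_l -> bool},
        [&& [forall j, h j \in E], E \subset codom h &
            (\prod_(j < l) (if a j then h j else (h j)^-1)) == x]]].

Definition dedge_pairs (gT : finGroupType) (d : nat) (x : gT) (i : nat)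
  : {set {set gT} * {set gT}} :=
  [set p : {set gT} * {set gT} |
     [&& is_edge d x p.1, is_edge d x p.2, #|p.1| == d, #|p.2| == d
       & #|p.1 :&: p.2| == i]].

(* Main.v *)
Require Import Defs.
From mathcomp Require Import all_boot all_fingroup zify.
Set Implicit Arguments. Unset Strict Implicit. Unset Printing Implicit Defensive.
Local Open Scope group_scope.

Lemma prod_cancel (gT : finGroupType) n (k : 'I_n) (F G : 'I_n -> gT) :
  (forall j, j != k -> F j = G j) ->
  \prod_(j < n) F j = \prod_(j < n) G j -> F k = G k.
Proof.
elim: n k F G => [[]//|n IH] k F G eqFG.
rewrite !big_ord_recr /=.
case: (eqVneq k ord_max) => [ek|nk]; first rewrite ek in eqFG *.
  have -> : \prod_(j < n) F (widen_ord (leqnSn n) j) = \prod_(j < n) G (widen_ord (leqnSn n) j).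
    apply: eq_bigr => j _; apply: eqFG; by rewrite -val_eqE /= neq_ltn ltn_ord.
  by move/mulgI.
rewrite eqFG; last by rewrite eq_sym.
move/mulIg.
have kn : (k < n)%N by move: (ltn_ord k) nk; rewrite -val_eqE /= ltnS leq_eqVlt => /orP [/eqP->|//]; rewrite eqxx.
move/(IH (Ordinal kn) (fun j => F (widen_ord (leqnSn n) j)) (fun j => G (widen_ord (leqnSn n) j))).
have -> : widen_ord (leqnSn n) (Ordinal kn) = k by apply: val_inj.
apply => j nj; apply: eqFG; apply: contra nj => /eqP ej; apply/eqP/val_inj; rewrite /= -ej //.
Qed.

Lemma edge_wit (gT : finGroupType) d (x : gT) (E : {set gT}) :
  is_edge d x E -> #|E| = d ->
  exists h : {ffun 'I_d -> gT}, exists a : {ffun 'I_d -> bool},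
   [/\ injective h, E = [set y | y \in codom h] &
       \prod_(j < d) (if a j then h j else (h j)^-1) = x].
Proof.
case/andP=> _ /existsP [[m Hm] /andP [/= Hl /existsP [h /existsP [a /and3P [hE Ecod /eqP prodx]]]]] cE.
have em : m = d by move: Hm Hl; rewrite cE ltnS => H1 H2; apply/eqP; rewrite eqn_leq H1 H2.
subst m.
exists h, a; split => //.
- apply/injectiveP; apply/injectiveP => j1 j2 e12.
  have : #|image h 'I_d| == #|'I_d|.
    by rewrite eqn_leq leq_image_card card_ord -{1}cE subset_leq_card.
  by move/image_injP; apply.
- apply/setP => y; rewrite inE; apply/idP/idP; first by move/(subsetP Ecod).
  by case/codomP => j ->; apply: (forallP hE).
Qed.

Lemma agree_off (gT : finGroupType) n (x : gT) (k : 'I_n) (h g : {ffun 'I_n -> gT})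
  (a : {ffun 'I_n -> bool}) : (forall j, j != k -> h j = g j) ->
  \prod_(j < n) (if a j then h j else (h j)^-1) = x ->
  \prod_(j < n) (if a j then g j else (g j)^-1) = x -> h = g.
Proof.
move=> eq1 p1 p2.
have := @prod_cancel gT n k (fun j => if a j then h j else (h j)^-1) (fun j => if a j then g j else (g j)^-1).
rewrite p1 p2 => /(_ _ erefl) /= ek.
apply/ffunP => j; case: (eqVneq j k) => [->|/eq1 //].
have {}ek : (if a k then h k else (h k)^-1) = (if a k then g k else (g k)^-1).
  by apply: ek => j' /eq1 ->.
by case: (a k) ek => // /invg_inj.
Qed.

Definition pos (gT : finType) n (j0 : 'I_n) (h : {ffun 'I_n -> gT}) y :=
  odflt j0 [pick j | h j == y].

Lemma posK (gT : finType) n (j0 : 'I_n) (h : {ffun 'I_n -> gT}) y :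
  y \in codom h -> h (pos j0 h y) = y.
Proof.
rewrite /pos; case: pickP => [j /eqP //|H /codomP [j ej]].
by move: (H j); rewrite ej eqxx.
Qed.

Lemma main_count (gT : finGroupType) (d : nat) (x : gT) (i : nat) :
  (2 <= d)%N -> x != 1%g -> (1 <= i)%N -> (i <= d - 1)%N ->
  (#|dedge_pairs d x i| <= 2 ^ (2 * d) * 'C(d, i) ^ 2 * i`! * #|gT| ^ (2 * d - i - 2))%N.
Proof.
move=> d2 _ i1 id1.
have d0 : (0 < d)%N by apply: leq_trans d2.
pose j0 : 'I_d := Ordinal d0.
have dl : (d - 1 < d)%N by rewrite subn1 prednK // ltnSn. 
pose last : 'I_d := Ordinal dl.
pose good (p : {ffun 'I_d -> gT} * {ffun 'I_d -> bool}) :=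
  injectiveb p.1 && (\prod_(j < d) (if p.2 j then p.1 j else (p.1 j)^-1) == x).
pose cs (h : {ffun 'I_d -> gT}) := [set y | y \in codom h].
pose R := [set p | [&& good p.1, good p.2 & #|cs p.1.1 :&: cs p.2.1| == i]].
pose Gm (p : ({ffun 'I_d -> gT} * {ffun 'I_d -> bool}) * ({ffun 'I_d -> gT} * {ffun 'I_d -> bool})) :=
   (cs p.1.1, cs p.2.1).
pose Qof (h h' : {ffun 'I_d -> gT}) := [set j | h' j \in codom h].
pose kof (Q : {set 'I_d}) := odflt j0 [pick j in ~: Q].
pose Phi (p : ({ffun 'I_d -> gT} * {ffun 'I_d -> bool}) * ({ffun 'I_d -> gT} * {ffun 'I_d -> bool})) :=
  let Q := Qof p.1.1 p.2.1 in
  ((p.1.2, [ffun t : 'I_(d-1) => p.1.1 (widen_ord (leq_subr 1 d) t)]),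
   (p.2.2, ((Q, [ffun t : 'I_i => pos j0 p.1.1 (p.2.1 (nth j0 (enum Q) t))]),
            [ffun t : 'I_(d-i-1) => p.2.1 (nth j0 (enum (~: Q :\ kof Q)) t)]))).
pose S := setX (setX [set: {ffun 'I_d -> bool}] [set: {ffun 'I_(d-1) -> gT}])
   (setX [set: {ffun 'I_d -> bool}] (setX (setX [set Q : {set 'I_d} | #|Q| == i]
      [set f : {ffun 'I_i -> 'I_d} | injectiveb f]) [set: {ffun 'I_(d-i-1) -> gT}])).
have step1 : dedge_pairs d x i \subset Gm @: R.
  apply/subsetP => -[E F]; rewrite inE /= => /and5P [eE eF /eqP cE /eqP cF cI].
  have [h [a [ih EE ph]]] := edge_wit eE cE.
  have [h' [a' [ih' EF ph']]] := edge_wit eF cF.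
  apply/imsetP; exists ((h, a), (h', a')); last by rewrite /Gm /cs /= EE EF.
  rewrite inE /=.
  have -> : cs h = E by rewrite EE.
  have -> : cs h' = F by rewrite EF.
  rewrite /good /= cI ph ph' !eqxx andbT.
  by rewrite !andbT; apply/andP; split; apply/injectiveP.
have QR : forall p, p \in R -> #|Qof p.1.1 p.2.1| = i.
  move=> [[h a] [h' a']]; rewrite inE /good /= => /and3P [_ /andP [/injectiveP ih' _] /eqP <-].
  rewrite -(card_imset _ ih'); apply: eq_card => y; rewrite !inE.
  apply/imsetP/andP => [[j]|[yh /codomP [j ej]]].
    by rewrite inE => jq ->; split => //; apply: codom_f.
  by exists j => //; rewrite inE -ej.
have step2 : {in R &, injective Phi}.
  move=> [[h a] [h' a']] [[g b] [g' b']] pR qR.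
  have cQ := QR _ pR.
  move: pR qR; rewrite !inE /good /= => /and3P [/andP [_ /eqP ph] /andP [/injectiveP ih' /eqP ph'] _].
  move=> /and3P [/andP [_ /eqP pg] /andP [_ /eqP pg'] _].
  rewrite /Phi /=; case=> ea ehr ea' eQ ephi ev; subst b b'.
  have ehg : h = g.
    apply: (agree_off (k := last)) ph pg => j jn.
    have jl : (j < d - 1)%N.
      by move: jn (ltn_ord j); rewrite -val_eqE /= => jn jd; lia.
    move: (congr1 (fun f : {ffun 'I_(d-1) -> gT} => f (Ordinal jl)) ehr); rewrite !ffunE.
    by have -> : widen_ord (leq_subr 1 d) (Ordinal jl) = j by apply: val_inj.
  subst g.
  rewrite -eQ in ephi ev.
  suff -> : h' = g' by [].
  apply: (agree_off (k := kof (Qof h h'))) ph' pg' => j jk.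
  case: (boolP (j \in Qof h h')) => jQ.
    have lt : (index j (enum (Qof h h')) < i)%N by rewrite -cQ cardE index_mem mem_enum.
    move: (congr1 (fun f : {ffun 'I_i -> 'I_d} => f (Ordinal lt)) ephi); rewrite !ffunE /= nth_index ?mem_enum //.
    move/(congr1 h); rewrite !posK //; first by move: jQ; rewrite eQ inE.
    by move: jQ; rewrite inE.
  have kQ : kof (Qof h h') \in ~: Qof h h'.
    rewrite /kof; case: pickP => [//| H]; by move: (H j); rewrite inE jQ.
  have cC : #|~: Qof h h' :\ kof (Qof h h')| = (d - i - 1)%N.
    move: (cardsD1 (kof (Qof h h')) (~: Qof h h')) (cardsC (Qof h h')).
    rewrite kQ cQ card_ord; lia.
  have lt : (index j (enum (~: Qof h h' :\ kof (Qof h h'))) < d - i - 1)%N.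
    by rewrite -cC cardE index_mem mem_enum in_setD1 in_setC jk jQ.
  move: (congr1 (fun f : {ffun 'I_(d-i-1) -> gT} => f (Ordinal lt)) ev); rewrite !ffunE /= nth_index //.
  by rewrite mem_enum in_setD1 in_setC jk jQ.
have step3 : Phi @: R \subset S.
  apply/subsetP => _ /imsetP [[[h a] [h' a']] pR ->].
  have cQ := QR _ pR.
  move: pR; rewrite inE /good /= => /and3P [_ /andP [/injectiveP ih' _] _].
  rewrite !inE /= cQ eqxx /= andbT.
  apply/injectiveP => t1 t2; rewrite !ffunE.
  set Q := Qof h h'.
  have mQ : forall t : 'I_i, nth j0 (enum Q) t \in Q.
    by move=> t; rewrite -mem_enum mem_nth // -cardE cQ.
  move/(congr1 h); rewrite !posK; [|by move: (mQ t2); rewrite inE|by move: (mQ t1); rewrite inE].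
  move/ih'/eqP; rewrite nth_uniq ?enum_uniq // -?cardE ?cQ //.
  by move/eqP/val_inj.
have cS : #|S| = (2 ^ d * #|gT| ^ (d - 1) * (2 ^ d * ('C(d, i) * (d ^_ i) * #|gT| ^ (d - i - 1))))%N.
  by rewrite !cardsX !cardsT card_draws card_inj_ffuns !card_ffun !card_ord card_bool.
apply: (leq_trans (subset_leq_card step1)).
apply: (leq_trans (leq_imset_card _ _)).
rewrite -(card_in_imset step2).
apply: (leq_trans (subset_leq_card step3)).
rewrite cS -bin_ffact.
have -> : (2 * d - i - 2 = (d - 1) + (d - i - 1))%N by lia.
rewrite mul2n -addnn !expnD -mulnn.
set A := (2 ^ d)%N; set B := (#|gT| ^ (d-1))%N; set C := (#|gT| ^ (d-i-1))%N.
set c := 'C(d,i); set f := i`!.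
nia.
Qed.

Close Scope group_scope.

Theorem lemma15 (gT : finGroupType) (d : nat) (x : gT) (i : nat) :
  (2 <= d)%N -> x != 1%g -> (1 <= i)%N -> (i <= d - 1)%N ->
  (#|dedge_pairs d x i| <= 2 ^ (2 * d) * 'C(d, i) ^ 2 * i`! * #|gT| ^ (2 * d - i - 2))%N.
Proof. exact: main_count. Qed.
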